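(* Let $d\geq 2$ and $n\geq d+2$. Let $\mathsf{B}^{d+1}_n$ be the simplicial complex whose facets are $\{i,i+1,\dots,i+d+1\}$ for $i=1,\dots,n-d-1$ (a stacked $(d+1)$-ball), and let $\mathsf{K}^d_n=\partial\mathsf{B}^{d+1}_n$, whose facet hypergraph is $$\mathcal{F}(\mathsf{K}^d_n)=\{g\setminus\{w\}: g\in\mathcal{F}(\mathsf{B}^{d+1}_n),\ w\in g\setminus\{\max g,\min g\}\}\cup\{\{1,\dots,d+1\},\{n-d,\dots,n\}\}.$$ Then: (i) if $n=(d+2)k$ for an integer $k\geq 1$, then $\tau(\mathcal{F}(\mathsf{B}^{d+1}_n))=\frac{n}{d+2}$; (ii) if $n=(d+3)k$ for an integer $k\geq 1$, then $\tau(\mathcal{F}(\mathsf{K}^d_n))=\frac{2n}{d+3}$.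
   Context: $\mathcal{F}(\cdot)$ denotes the facet hypergraph; $\tau(\mathcal{H})$ is the minimum size of a set of vertices meeting every hyperedge of $\mathcal{H}$. *)

(* Defs.v *)
From mathcomp Require Import all_boot.
Set Implicit Arguments. Unset Strict Implicit. Unset Printing Implicit Defensive.

(* Vertices are 1..n, represented in 'I_n.+1 (the value 0 is an extra
   isolated vertex lying in no edge; it does not affect tau). *)

Definition ival (n a b : nat) : {set 'I_n.+1} :=
  [set x : 'I_n.+1 | (a <= x) && (x <= b)].

Definition facetsB (d n : nat) : {set {set 'I_n.+1}} :=
  [set ival n i (i + d + 1) | i : 'I_n.+1 & (1 <= i) && (i <= n - d - 1)].

Definition facetsK (d n : nat) : {set {set 'I_n.+1}} :=
  [set ival n (nat_of_ord i) (i + d + 1) :\ w | i in 'I_n.+1, w in 'I_n.+1 &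
      [&& 1 <= nat_of_ord i, i <= n - d - 1, i < nat_of_ord w & nat_of_ord w < i + d + 1]]
  :|: [set ival n 1 (d + 1); ival n (n - d) n].

Definition transversal (T : finType) (H : {set {set T}}) (S : {set T}) : bool :=
  [forall e in H, e :&: S != set0].

(* transversal number: minimum size of a transversal
   (defaults to #|T| if none exists, which does not occur here) *)
Definition tau (T : finType) (H : {set {set T}}) : nat :=
  \big[minn/#|T|]_(S : {set T} | transversal H S) #|S|.

(* Main.v *)
Require Import Defs.
From mathcomp Require Import all_boot zify.
Set Warnings "-notation-overridden".
Set Implicit Arguments. Unset Strict Implicit. Unset Printing Implicit Defensive.

Lemma bigmin_le (I : eqType) (r : seq I) (P : pred I) (F : I -> nat) x j :
  j \in r -> P j -> \big[minn/x]_(i <- r | P i) F i <= F j.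
Proof.
elim: r => //= a r IH; rewrite inE big_cons; case/orP => [/eqP-> Pj|jr Pj].
  by rewrite Pj geq_minl.
case: (P a); last exact: IH.
by rewrite geq_min IH ?orbT.
Qed.

Lemma tau_le (T : finType) (H : {set {set T}}) S : Defs.transversal H S -> tau H <= #|S|.
Proof. move=> tS; rewrite /tau; apply: bigmin_le => //; exact: mem_index_enum. Qed.

Lemma tau_ge (T : finType) (H : {set {set T}}) m :
  m <= #|T| -> (forall S, Defs.transversal H S -> m <= #|S|) -> m <= tau H.
Proof.
move=> hT hS; rewrite /tau; apply: (big_ind (fun v => m <= v)) => //.
by move=> x y hx hy; rewrite leq_min hx hy.
Qed.

Lemma in_ival n a b (x : 'I_n.+1) : (x \in ival n a b) = (a <= x) && (x <= b).
Proof. by rewrite inE. Qed.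

Lemma card_blocks n (S : {set 'I_n.+1}) p c k :
  (forall m, m < k -> c <= #|S :&: ival n (m*p+1) (m*p+p)|) ->
  c * k <= #|S :&: ival n 1 (k*p)|.
Proof.
elim: k => [|k IH] h; first by rewrite muln0.
have e : S :&: ival n 1 (k.+1*p) =
   (S :&: ival n 1 (k*p)) :|: (S :&: ival n (k*p+1) (k*p+p)).
  apply/setP=> x; rewrite !inE -andb_orr; congr (_ && _); apply/idP/idP; lia.
have e2 : (S :&: ival n 1 (k*p)) :&: (S :&: ival n (k*p+1) (k*p+p)) = set0.
  apply/setP=> x; rewrite !inE; apply/idP/idP; lia.
rewrite e cardsU e2 cards0 subn0 mulnS addnC.
apply: leq_add; [apply: IH => m hm; apply: h; lia | apply: h; lia].
Qed.
Lemma trans_hit (T : finType) (H : {set {set T}}) S e :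
  Defs.transversal H S -> e \in H -> 0 < #|S :&: e|.
Proof. by move=> /forall_inP h he; rewrite card_gt0 setIC; exact: h. Qed.

Lemma hit (T : finType) (e S : {set T}) y : y \in e -> y \in S -> e :&: S != set0.
Proof. by move=> h1 h2; apply/set0Pn; exists y; rewrite inE h1 h2. Qed.

Lemma partB (d n k : nat) : 2 <= d -> d + 2 <= n -> 1 <= k -> n = (d + 2) * k ->
  tau (facetsB d n) = k.
Proof.
move=> hd hn hk en; set p := d + 2.
apply/eqP; rewrite eqn_leq; apply/andP; split.
  pose S : {set 'I_n.+1} := [set inord (m.+1 * p) | m : 'I_k].
  apply: (leq_trans (tau_le (S := S) _)).
    apply/forall_inP => e /imsetP [i hi ->]; rewrite inE in hi.
    have dv := divn_eq (i + d + 1) p.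
    have md : (i + d + 1) %% p < p by rewrite ltn_mod /p addn2.
    set q := (i + d + 1) %/ p in dv.
    have enp : n = k * p by rewrite en mulnC.
    rewrite /p in dv md enp.
    have hq1 : 0 < q.
      rewrite lt0n; apply/negP => /eqP q0; rewrite q0 mul0n add0n in dv; lia.
    have hqk : q <= k.
      by rewrite -(@leq_pmul2r p) /p ?addn2 //; lia.
    have hm : q.-1 < k by lia.
    apply: (hit (y := inord (q * p))).
      rewrite in_ival inordK /p; lia.
    apply/imsetP; exists (Ordinal hm) => //=.
    by rewrite prednK.
  by apply: (leq_trans (leq_imset_card _ _)); rewrite card_ord.
apply: tau_ge; first by rewrite card_ord; lia.
move=> S tS.
have := @card_blocks n S p 1 k.
rewrite mul1n => h; apply: (leq_trans (h _)); last by apply: subset_leq_card; exact: subsetIl.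
move=> m hm; apply: (trans_hit tS).
have hmp : m.+1 * p <= k * p by rewrite leq_mul2r hm orbT.
rewrite mulSn in hmp.
have enp : n = k * p by rewrite en mulnC.
rewrite /p in hmp enp.
apply/imsetP; exists (inord (m * p + 1)).
  rewrite inE inordK /p; lia.
rewrite inordK; last by rewrite /p; lia.
by have -> : m * p + 1 + d + 1 = m * p + p by rewrite /p; lia.
Qed.

Lemma hitK d n (S : {set 'I_n.+1}) (i w : nat) :
  Defs.transversal (facetsK d n) S -> 1 <= i -> i <= n - d - 1 -> i < w -> w < i + d + 1 ->
  exists y : 'I_n.+1, [/\ y \in S, i <= y, y <= i + d + 1 & (y : nat) != w].
Proof.
move=> tS h1 h2 h3 h4.
have he : ival n i (i + d + 1) :\ inord w \in facetsK d n.
  apply/setUP; left; apply/imset2P.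
  apply: (@Imset2spec _ _ _ _ _ _ _ (inord i) (inord w)).
  - by [].
  - rewrite inE /= !inordK; lia.
  - by rewrite inordK //; lia.
have := trans_hit tS he; rewrite card_gt0 => /set0Pn [y]; rewrite !inE.
case/andP=> yS /andP [yw /andP [y1 y2]]; exists y; split => //.
by apply: contra yw => /eqP <-; rewrite inord_val.
Qed.

Lemma blockK d n (S : {set 'I_n.+1}) j :
  2 <= d -> Defs.transversal (facetsK d n) S -> j + d + 3 <= n ->
  2 <= #|S :&: ival n (j + 1) (j + d + 3)|.
Proof.
move=> hd tS hj.
suff [y [z [yS zS yz hy hz]]] : exists y z : 'I_n.+1, [/\ y \in S, z \in S, (y : nat) != (z : nat),
   j + 1 <= y <= j + d + 3 & j + 1 <= z <= j + d + 3].
  have sub : [set y; z] \subset S :&: ival n (j + 1) (j + d + 3).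
    apply/subsetP => x; rewrite !inE => /orP [] /eqP ->; rewrite ?yS ?zS ?hy ?hz //.
  apply: leq_trans (subset_leq_card sub); rewrite cards2.
  by rewrite ltnS lt0b; apply: contraNneq yz => ->.
have [y [yS y1 y2 yw]] := @hitK d n S (j + 1) (j + 2) tS ltac:(lia) ltac:(lia) ltac:(lia) ltac:(lia).
have [yint|ynint] := boolP ((j + 1 < y) && (y < j + 1 + d + 1)).
  have [z [zS z1 z2 zw]] := @hitK d n S (j + 1) y tS ltac:(lia) ltac:(lia) ltac:(lia) ltac:(lia).
  exists y, z; split => //; [by rewrite eq_sym | lia | lia].
have [ye|yne] := boolP ((y : nat) == j + 1).
  have [z [zS z1 z2 zw]] := @hitK d n S (j + 2) (j + 3) tS ltac:(lia) ltac:(lia) ltac:(lia) ltac:(lia).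
  exists y, z; split => //; lia.
have [z [zS z1 z2 zw]] := @hitK d n S (j + 2) y tS ltac:(lia) ltac:(lia) ltac:(lia) ltac:(lia).
exists y, z; split => //; [by rewrite eq_sym | lia | lia].
Qed.

Definition SK n p k : {set 'I_n.+1} :=
  [set inord (m * p + 2) | m : 'I_k] :|: [set inord (m * p + 3) | m : 'I_k].

Lemma ptS n p k m j : m < k -> 2 <= j <= 3 -> k * p = n -> 3 <= p ->
  exists y : 'I_n.+1, y \in SK n p k /\ (y : nat) = m * p + j.
Proof.
move=> hm hj hn hp.
have hmp : m.+1 * p <= k * p by rewrite leq_mul2r hm orbT.
rewrite mulSn in hmp.
exists (inord (m * p + j)); split; last by rewrite inordK //; lia.
have [->|->] : j = 2 \/ j = 3 by lia.
  by apply/setUP; left; apply/imsetP; exists (Ordinal hm).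
by apply/setUP; right; apply/imsetP; exists (Ordinal hm).
Qed.

Lemma hitW n (S : {set 'I_n.+1}) i b (w y : 'I_n.+1) :
  y \in S -> i <= y <= b -> (y : nat) != w -> (ival n i b :\ w) :&: S != set0.
Proof.
move=> yS hy yw; apply: (hit (y := y)) yS; rewrite !inE hy andbT.
by apply: contraNneq yw => ->.
Qed.

Lemma partK (d n k : nat) : 2 <= d -> d + 2 <= n -> 1 <= k -> n = (d + 3) * k ->
  tau (facetsK d n) = 2 * k.
Proof.
move=> hd hn hk en; set p := d + 3.
have enp : n = k * p by rewrite en mulnC.
apply/eqP; rewrite eqn_leq; apply/andP; split.
  apply: (leq_trans (tau_le (S := SK n p k) _)).
    have hp : 5 <= p by rewrite /p; lia.
    have ltk : forall m, m * p < k * p -> m < k by move=> m; rewrite ltn_mul2r => /andP[].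
    apply/forall_inP => e; case/setUP.
      case/imset2P => i w _; rewrite inE => /and4P [h1 h2 h3 h4] ->.
      have dv := divn_eq i.-1 p.
      have md : i.-1 %% p < p by rewrite ltn_mod /p addn3.
      move: dv md; set q := i.-1 %/ p; set r := i.-1 %% p => dv md.
      rewrite /p in hp enp dv md.
      have : r = 0 \/ (1 <= r <= 2) \/ r = 3 \/ 4 <= r by lia.
      case=> [r0|[r12|[r3|r4]]].
      - have hq : q < k by apply: ltk; rewrite /p; lia.
        have [y2 [y2S y2v]] := @ptS n p k q 2 hq isT (esym enp) ltac:(lia).
        have [y3 [y3S y3v]] := @ptS n p k q 3 hq isT (esym enp) ltac:(lia).
        rewrite /p in y2v y3v.
        have [y2w|y2w] := boolP ((y2 : nat) != w).
          by apply: (hitW y2S) => //; lia.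
        by apply: (hitW y3S); lia.
      - have hq : q < k by apply: ltk; rewrite /p; lia.
        have [y [yS yv]] := @ptS n p k q r.+1 hq ltac:(lia) (esym enp) ltac:(lia).
        rewrite /p in yv; by apply: (hitW yS); lia.
      - have hq : q.+1 < k by apply: ltk; rewrite mulSn /p; lia.
        have [y [yS yv]] := @ptS n p k q.+1 2 hq isT (esym enp) ltac:(lia).
        rewrite mulSn /p in yv; by apply: (hitW yS); lia.
      - have hq : q.+1 < k by apply: ltk; rewrite mulSn /p; lia.
        have [y2 [y2S y2v]] := @ptS n p k q.+1 2 hq isT (esym enp) ltac:(lia).
        have [y3 [y3S y3v]] := @ptS n p k q.+1 3 hq isT (esym enp) ltac:(lia).
        rewrite mulSn /p in y2v y3v.
        have [y2w|y2w] := boolP ((y2 : nat) != w).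
          by apply: (hitW y2S) => //; lia.
        by apply: (hitW y3S); lia.
    case/set2P => ->.
      have [y [yS yv]] := @ptS n p k 0 2 hk isT (esym enp) ltac:(lia).
      by apply: (hit (y := y)) yS; rewrite inE yv; lia.
    have hq : k.-1 < k by lia.
    have [y [yS yv]] := @ptS n p k k.-1 3 hq isT (esym enp) ltac:(lia).
    have hkp : k.-1 * p + p = k * p by rewrite addnC -mulSn prednK.
    rewrite /p in hkp yv enp.
    by apply: (hit (y := y)) yS; rewrite inE yv; lia.
  rewrite cardsU; apply: (leq_trans (leq_subr _ _)).
  rewrite mul2n -addnn; apply: leq_add;
   by apply: (leq_trans (leq_imset_card _ _)); rewrite card_ord.
apply: tau_ge; first by rewrite card_ord; lia.
move=> S tS.
have := @card_blocks n S p 2 k.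
move=> h; apply: (leq_trans _ (leq_trans (h _) _)); first by rewrite mulnC.
  move=> m hm.
  have hmp : m.+1 * p <= k * p by rewrite leq_mul2r hm orbT.
  rewrite mulSn in hmp.
  have := @blockK d n S (m * p) hd tS ltac:(rewrite /p in hmp enp *; lia).
  by have -> : m * p + d + 3 = m * p + p by rewrite /p; lia.
by apply: subset_leq_card; exact: subsetIl.
Qed.

Theorem mainTheorem10 (d n : nat) :
  2 <= d -> d + 2 <= n ->
  (forall k : nat, 1 <= k -> n = (d + 2) * k -> tau (facetsB d n) = k) /\
  (forall k : nat, 1 <= k -> n = (d + 3) * k -> tau (facetsK d n) = 2 * k).
Proof.
move=> hd hn; split=> k hk en; [exact: partB | exact: partK].
Qed.
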